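(* Let $k$ be a field of characteristic $0$ containing a primitive fifth root of unity. For $\underline{a}=(a_1,\ldots,a_7)\in k^7$ let $$F_{\underline{a}}=a_1x_0^3 + a_2x_0x_1x_4 + a_3x_0x_2x_3 + a_4x_1^2x_3 + a_5x_1x_2^2 + a_6x_2x_4^2+a_7x_3^2x_4 .$$ Define $$\begin{aligned}\Delta(\underline{a}):=\;& a^4_2 a^5_3 a_4 a_6 + 8 a_1 a^2_2 a^4_3 a^2_4 a^2_6 + 16 a^2_1 a^3_3 a^3_4 a^3_6 + a^5_2 a^4_3 a_5 a_7 + 15 a_1 a^3_2 a^3_3 a_4 a_5 a_6 a_7\\ &+ 12 a^2_1 a_2 a^2_3 a^2_4 a_5 a^2_6 a_7 + 8 a_1 a^4_2 a^2_3 a^2_5 a^2_7 + 12 a^2_1 a^2_2 a_3 a_4 a^2_5 a_6 a^2_7 + 27 a^3_1 a^2_4 a^2_5 a^2_6 a^2_7 + 16 a^2_1 a^3_2 a^3_5 a^3_7\end{aligned}$$ and $D(\underline{a})=a_1a_4a_5a_6a_7\,\Delta(\underline{a})$. Then the equation $F_{\underline{a}}=0$ defines a smooth cubic threefold in $\mathbb{P}^4$ if and only if $D(\underline{a})\neq 0$.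
   Context: $(x_0:\ldots:x_4)$ are homogeneous coordinates on $\mathbb{P}^4$. *)

(* Defs.v *)
From HB Require Import structures.
From mathcomp Require Import all_boot all_order all_algebra.
From mathcomp Require Import mpoly.
Set Implicit Arguments. Unset Strict Implicit. Unset Printing Implicit Defensive.
Import GRing.Theory.
Local Open Scope ring_scope.

Definition Xv {k : fieldType} (i : 'I_5) : {mpoly k[5]} := 'X_i.

Definition Fa {k : fieldType} (a1 a2 a3 a4 a5 a6 a7 : k) : {mpoly k[5]} :=
  let x0 := Xv (@inord 4 0) in let x1 := Xv (@inord 4 1) in
  let x2 := Xv (@inord 4 2) in let x3 := Xv (@inord 4 3) in
  let x4 := Xv (@inord 4 4) in
  a1 *: (x0 ^+ 3) + a2 *: (x0 * x1 * x4) + a3 *: (x0 * x2 * x3)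
  + a4 *: (x1 ^+ 2 * x3) + a5 *: (x1 * x2 ^+ 2) + a6 *: (x2 * x4 ^+ 2)
  + a7 *: (x3 ^+ 2 * x4).

Definition Delta {k : fieldType} (a1 a2 a3 a4 a5 a6 a7 : k) : k :=
  a2^+4 * a3^+5 * a4 * a6 + 8%:R * a1 * a2^+2 * a3^+4 * a4^+2 * a6^+2
  + 16%:R * a1^+2 * a3^+3 * a4^+3 * a6^+3 + a2^+5 * a3^+4 * a5 * a7
  + 15%:R * a1 * a2^+3 * a3^+3 * a4 * a5 * a6 * a7
  + 12%:R * a1^+2 * a2 * a3^+2 * a4^+2 * a5 * a6^+2 * a7
  + 8%:R * a1 * a2^+4 * a3^+2 * a5^+2 * a7^+2
  + 12%:R * a1^+2 * a2^+2 * a3 * a4 * a5^+2 * a6 * a7^+2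
  + 27%:R * a1^+3 * a4^+2 * a5^+2 * a6^+2 * a7^+2
  + 16%:R * a1^+2 * a2^+3 * a5^+3 * a7^+3.

Definition Dd {k : fieldType} (a1 a2 a3 a4 a5 a6 a7 : k) : k :=
  a1 * a4 * a5 * a6 * a7 * Delta a1 a2 a3 a4 a5 a6 a7.

Definition singular_point {k : fieldType} (L : fieldType) (f : {rmorphism k -> L})
    (F : {mpoly k[5]}) (x : 'I_5 -> L) : Prop :=
  (exists i, x i != 0) /\ (map_mpoly f F).@[x] = 0 /\
  forall i : 'I_5, (map_mpoly f (F^`M(i))).@[x] = 0.

(* V(F) subset P^4 is a smooth hypersurface: no singular point over any
   algebraically closed extension of k (i.e. geometrically smooth). *)
Definition smooth_hypersurface {k : fieldType} (F : {mpoly k[5]}) : Prop :=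
  forall (L : closedFieldType) (f : {rmorphism k -> L}) (x : 'I_5 -> L),
    ~ singular_point f F x.

(* Main.v *)
Require Import Defs.
From HB Require Import structures.
From mathcomp Require Import all_boot all_order all_algebra.
From mathcomp Require Import mpoly.
From mathcomp Require Import boolp classical_sets filter.
From mathcomp Require Import closed_field generic_quotient.
From mathcomp Require Import ring.
Set Implicit Arguments. Unset Strict Implicit. Unset Printing Implicit Defensive.
Import GRing.Theory.
Local Open Scope ring_scope.

Inductive ex := EV of nat | E0 | E1 | EA of ex & ex | EM of ex & ex | EN of ex | EI of ex.

Fixpoint enc (e : ex) : GenTree.tree nat := match e with
 | EV n => GenTree.Leaf n | E0 => GenTree.Node 0 [::] | E1 => GenTree.Node 1 [::]
 | EA a b => GenTree.Node 2 [:: enc a; enc b] | EM a b => GenTree.Node 3 [:: enc a; enc b]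
 | EN a => GenTree.Node 4 [:: enc a] | EI a => GenTree.Node 5 [:: enc a] end.

Fixpoint dec (t : GenTree.tree nat) : option ex := match t with
 | GenTree.Leaf n => Some (EV n)
 | GenTree.Node 0 [::] => Some E0
 | GenTree.Node 1 [::] => Some E1
 | GenTree.Node 2 [:: a; b] => match dec a, dec b with Some x, Some y => Some (EA x y) | _, _ => None end
 | GenTree.Node 3 [:: a; b] => match dec a, dec b with Some x, Some y => Some (EM x y) | _, _ => None end
 | GenTree.Node 4 [:: a] => match dec a with Some x => Some (EN x) | _ => None end
 | GenTree.Node 5 [:: a] => match dec a with Some x => Some (EI x) | _ => None end
 | _ => None end.

Lemma encK : pcancel enc dec.
Proof. by elim => //= [a -> b ->|a -> b ->|a ->|a ->]. Qed.

HB.instance Definition _ := Countable.copy ex (pcan_type encK).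

Section Sub.
Variable k : fieldType.
Fixpoint ev (s : seq k) (e : ex) : k := match e with
 | EV i => nth 0 s i | E0 => 0 | E1 => 1 | EA a b => ev s a + ev s b
 | EM a b => ev s a * ev s b | EN a => - ev s a | EI a => (ev s a)^-1 end.

Definition gen (s : seq k) : {pred k} := fun x => `[< exists e, ev s e = x >].

Lemma gen_closed s : divring_closed (gen s).
Proof.
split.
- by apply/asboolP; exists E1.
- move=> x y /asboolP[a <-] /asboolP[b <-]; apply/asboolP; exists (EA a (EN b)) => //.
- move=> x y /asboolP[a <-] /asboolP[b <-]; apply/asboolP; exists (EM a (EI b)) => //.
Qed.

Variable s : seq k.
HB.instance Definition _ := GRing.isDivringClosed.Build k (gen s) (gen_closed s).
Definition subF := {x : k | x \in gen s}.
HB.instance Definition _ := [isSub of subF for @sval k (fun x => x \in gen s)].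
HB.instance Definition _ := [Choice of subF by <:].
HB.instance Definition _ := [SubChoice_isSubComUnitRing of subF by <:].
HB.instance Definition _ := [SubComUnitRing_isSubIntegralDomain of subF by <:].
HB.instance Definition _ := [SubIntegralDomain_isSubField of subF by <:].

Lemma codeP (x : subF) : exists e, ev s e == val x.
Proof. by have /asboolP[e he] := valP x; exists e; rewrite he. Qed.
Definition code (x : subF) : ex := xchoose (codeP x).
Lemma codeK : pcancel code (fun e => insub (ev s e)).
Proof.
move=> x; rewrite /code; have /eqP -> := xchooseP (codeP x).
by rewrite valK.
Qed.
HB.instance Definition _ := Countable.copy subF (pcan_type codeK).
Check (subF : countFieldType).
End Sub.

Local Open Scope classical_set_scope.
Local Open Scope quotient_scope.
Section Ultra.
Variable k : fieldType.
Definition Ks (s : seq k) : closedFieldType := projT1 (countable_algebraic_closure (subF s)).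
Definition io (s : seq k) : {rmorphism subF s -> Ks s} :=
  proj1_sig (projT2 (countable_algebraic_closure (subF s))).

Definition F0 : set_system (seq k) :=
  fun A : set (seq k) => exists s0 : seq k, forall s, {subset s0 <= s} -> A s.
Lemma F0_proper : ProperFilter F0.
Proof.
split.
- by move=> [s0 H]; apply: (H s0).
- split.
  + by exists [::].
  + move=> A B [s1 h1] [s2 h2]; exists (s1 ++ s2) => s hs; split.
      by apply: h1 => x hx; apply: hs; rewrite mem_cat hx.
    by apply: h2 => x hx; apply: hs; rewrite mem_cat hx orbT.
  + by move=> P Q PQ [s0 h]; exists s0 => s hs; apply/PQ/h.
Qed.

Definition Ucid := cid (ultraFilterLemma F0_proper).
Definition U : set_system (seq k) := proj1_sig Ucid.
Lemma UU : UltraFilter U. Proof. exact: (proj2_sig Ucid).1. Qed.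
Lemma F0U : F0 `<=` U. Proof. exact: (proj2_sig Ucid).2. Qed.
Lemma UF : Filter U. Proof. by have [[]] := UU. Qed.
Lemma UP : ProperFilter U. Proof. by have [] := UU. Qed.

Lemma Ucone (s0 : seq k) (A : set (seq k)) :
  (forall s, {subset s0 <= s} -> A s) -> U A.
Proof. by move=> h; apply: F0U; exists s0. Qed.
Lemma UI (A B : set (seq k)) : U A -> U B -> U (A `&` B).
Proof. have := UF; case=> _ h _; exact: h. Qed.
Lemma US (A B : set (seq k)) : A `<=` B -> U A -> U B.
Proof. have := UF; case=> _ _ h; exact: h. Qed.
Lemma UT (A : set (seq k)) : (forall s, A s) -> U A.
Proof. by move=> h; apply: (Ucone (s0 := [::])). Qed.
Lemma Unot0 (A : set (seq k)) : U A -> exists s, A s.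
Proof.
move=> h; apply: contrapT => nA; have := UP; case=> + _; apply.
by apply: US h => s As; apply: nA; exists s.
Qed.

Definition Pr := forall s : seq k, Ks s.
HB.instance Definition _ := gen_eqMixin Pr.
HB.instance Definition _ := gen_choiceMixin Pr.

Definition padd (x y : Pr) : Pr := fun s => x s + y s.
Definition popp (x : Pr) : Pr := fun s => - x s.
Definition pmul (x y : Pr) : Pr := fun s => x s * y s.
Definition pinv (x : Pr) : Pr := fun s => (x s)^-1.
Definition p0 : Pr := fun s => 0.
Definition p1 : Pr := fun s => 1.

Lemma paddA : associative padd.
Proof. by move=> x y z; apply: functional_extensionality_dep => s; rewrite /padd addrA. Qed.
Lemma paddC : commutative padd.
Proof. by move=> x y; apply: functional_extensionality_dep => s; rewrite /padd addrC. Qed.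
Lemma padd0 : left_id p0 padd.
Proof. by move=> x; apply: functional_extensionality_dep => s; rewrite /padd add0r. Qed.
Lemma paddN : left_inverse p0 popp padd.
Proof. by move=> x; apply: functional_extensionality_dep => s; rewrite /padd addNr. Qed.
HB.instance Definition _ := GRing.isZmodule.Build Pr paddA paddC padd0 paddN.
Lemma pmulA : associative pmul.
Proof. by move=> x y z; apply: functional_extensionality_dep => s; rewrite /pmul mulrA. Qed.
Lemma pmulC : commutative pmul.
Proof. by move=> x y; apply: functional_extensionality_dep => s; rewrite /pmul mulrC. Qed.
Lemma pmul1 : left_id p1 pmul.
Proof. by move=> x; apply: functional_extensionality_dep => s; rewrite /pmul mul1r. Qed.
Lemma pmulD : left_distributive pmul (@GRing.add Pr).
Proof. by move=> x y z; apply: functional_extensionality_dep => s; rewrite /pmul /= /padd mulrDl. Qed.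
HB.instance Definition _ := GRing.Zmodule_isComPzRing.Build Pr pmulA pmulC pmul1 pmulD.

Lemma paddE (x y : Pr) s : (x + y) s = x s + y s. Proof. by []. Qed.
Lemma poppE (x : Pr) s : (- x) s = - x s. Proof. by []. Qed.
Lemma pmulE (x y : Pr) s : (x * y) s = x s * y s. Proof. by []. Qed.
Lemma p0E s : (0 : Pr) s = 0. Proof. by []. Qed.
Lemma p1E s : (1 : Pr) s = 1. Proof. by []. Qed.

Definition eqv (x y : Pr) : bool := `[< U (fun s => x s = y s) >].
Lemma eqv_refl : reflexive eqv.
Proof. by move=> x; apply/asboolP; apply: UT. Qed.
Lemma eqv_sym : ssrbool.symmetric eqv.
Proof.
by move=> x y; apply/asboolP/asboolP; apply: US => s /=.
Qed.
Lemma eqv_trans : transitive eqv.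
Proof.
move=> y x z /asboolP h1 /asboolP h2; apply/asboolP.
by apply: US (UI h1 h2) => s [/= -> ->].
Qed.
Canonical eqvR := EquivRel eqv eqv_refl eqv_sym eqv_trans.
Definition L := {eq_quot eqvR}.
HB.instance Definition _ := Choice.copy L {eq_quot eqvR}.

Lemma pi_eq (x y : Pr) : U (fun s => x s = y s) -> \pi_L x = \pi_L y.
Proof. by move=> h; apply/eqmodP; apply/asboolP. Qed.
Lemma pi_eqE (x y : Pr) : \pi_L x = \pi_L y -> U (fun s => x s = y s).
Proof. by move/eqmodP/asboolP. Qed.
Lemma reprpi (x : Pr) : U (fun s => repr (\pi_L x) s = x s).
Proof. by apply: pi_eqE; rewrite reprK. Qed.

Definition Ladd (a b : L) : L := \pi_L (repr a + repr b).
Definition Lopp (a : L) : L := \pi_L (- repr a).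
Definition Lmul (a b : L) : L := \pi_L (repr a * repr b).
Definition Linv (a : L) : L := \pi_L (pinv (repr a)).
Definition L0 : L := \pi_L 0.
Definition L1 : L := \pi_L 1.

Lemma piD (x y : Pr) : \pi_L (x + y) = Ladd (\pi_L x) (\pi_L y).
Proof. apply: pi_eq; apply: US (UI (reprpi x) (reprpi y)) => s [/= h1 h2]. by rewrite !paddE h1 h2. Qed.
Lemma piN (x : Pr) : \pi_L (- x) = Lopp (\pi_L x).
Proof. apply: pi_eq; apply: US (reprpi x) => s /= h1. by rewrite !poppE h1. Qed.
Lemma piM (x y : Pr) : \pi_L (x * y) = Lmul (\pi_L x) (\pi_L y).
Proof. apply: pi_eq; apply: US (UI (reprpi x) (reprpi y)) => s [/= h1 h2]. by rewrite !pmulE h1 h2. Qed.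
Lemma piV (x : Pr) : \pi_L (pinv x) = Linv (\pi_L x).
Proof. apply: pi_eq; apply: US (reprpi x) => s /= h1. by rewrite /pinv h1. Qed.

Lemma LaddA : associative Ladd.
Proof. by elim/(@quotW _ L)=> x; elim/(@quotW _ L)=> y; elim/(@quotW _ L)=> z; rewrite -!piD addrA. Qed.
Lemma LaddC : commutative Ladd.
Proof. by elim/(@quotW _ L)=> x; elim/(@quotW _ L)=> y; rewrite -!piD addrC. Qed.
Lemma Ladd0 : left_id L0 Ladd.
Proof. by elim/(@quotW _ L)=> x; rewrite /L0 -!piD add0r. Qed.
Lemma LaddN : left_inverse L0 Lopp Ladd.
Proof. by elim/(@quotW _ L)=> x; rewrite /L0 -piN -!piD addNr. Qed.
HB.instance Definition _ := GRing.isZmodule.Build L LaddA LaddC Ladd0 LaddN.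
Lemma LmulA : associative Lmul.
Proof. by elim/(@quotW _ L)=> x; elim/(@quotW _ L)=> y; elim/(@quotW _ L)=> z; rewrite -!piM mulrA. Qed.
Lemma LmulC : commutative Lmul.
Proof. by elim/(@quotW _ L)=> x; elim/(@quotW _ L)=> y; rewrite -!piM mulrC. Qed.
Lemma Lmul1 : left_id L1 Lmul.
Proof. by elim/(@quotW _ L)=> x; rewrite /L1 -!piM mul1r. Qed.
Lemma LmulD : left_distributive Lmul Ladd.
Proof.
move=> a b c; elim/(@quotW _ L): a => x; elim/(@quotW _ L): b => y; elim/(@quotW _ L): c => z.
by rewrite -piD -!piM -piD mulrDl.
Qed.
Lemma L1_neq0 : L1 != (L0 : L).
Proof.
apply/eqP => /pi_eqE /Unot0 [s /= /eqP]; by rewrite oner_eq0.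
Qed.
HB.instance Definition _ := GRing.Zmodule_isComNzRing.Build L LmulA LmulC Lmul1 LmulD L1_neq0.

Lemma LmulV : forall x : L, x != 0 -> Linv x * x = 1.
Proof.
elim/(@quotW _ L)=> x nx; case: (in_ultra_setVsetC (fun s => x s = 0) UU) => h.
  by case/eqP: nx; apply: pi_eq.
rewrite -piV; change (Lmul (\pi_L (pinv x)) (\pi_L x) = L1); rewrite -piM.
apply: pi_eq; apply: US h => s /= h.
by rewrite pmulE p1E /pinv mulVf //; apply/eqP.
Qed.
Lemma Linv0 : Linv (0 : L) = 0.
Proof. by change (Linv L0 = L0); rewrite /L0 -piV; apply: pi_eq; apply: UT => s; rewrite /pinv invr0. Qed.
HB.instance Definition _ := GRing.ComNzRing_isField.Build L LmulV Linv0.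

Definition evs (s : seq k) (x : Pr) : Ks s := x s.
Lemma evs_zmod s : zmod_morphism (evs s). Proof. by []. Qed.
Lemma evs_mon s : monoid_morphism (evs s). Proof. by []. Qed.
HB.instance Definition _ s := GRing.isZmodMorphism.Build Pr (Ks s) (evs s) (evs_zmod s).
HB.instance Definition _ s := GRing.isMonoidMorphism.Build Pr (Ks s) (evs s) (evs_mon s).

Definition piL (x : Pr) : L := \pi_L x.
Lemma piL_zmod : zmod_morphism piL.
Proof. by move=> x y; rewrite /piL piD piN. Qed.
Lemma piL_mon : monoid_morphism piL.
Proof. by split => // x y; rewrite /piL piM. Qed.
HB.instance Definition _ := GRing.isZmodMorphism.Build Pr L piL piL_zmod.
HB.instance Definition _ := GRing.isMonoidMorphism.Build Pr L piL piL_mon.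

Lemma Lclosed : GRing.closed_field_axiom L.
Proof.
move=> n P hn.
have h s : exists x : Ks s, x ^+ n = \sum_(i < n) evs s (repr (P i)) * x ^+ i.
  exact: (@solve_monicpoly (Ks s) n (fun i => evs s (repr (P i))) hn).
pose xs : Pr := fun s => proj1_sig (cid (h s)).
exists (piL xs).
rewrite -rmorphXn.
transitivity (piL (\sum_(i < n) repr (P i) * xs ^+ i)); last first.
  rewrite rmorph_sum; apply: eq_bigr => i _.
  by rewrite rmorphM rmorphXn; congr (_ * _); exact: reprK.
apply: pi_eq; apply: UT => s.
change (evs s (xs ^+ n) = evs s (\sum_(i < n) repr (P i) * xs ^+ i)).
rewrite rmorphXn rmorph_sum /= (proj2_sig (cid (h s))).
by apply: eq_bigr => i _; rewrite rmorphM rmorphXn.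
Qed.
HB.instance Definition _ := @Field_isAlgClosed.Build L Lclosed.

Definition phi (c : k) : L := piL (fun s => oapp (io s) 0 (insub c : option (subF s))).

Lemma gen_mem (s : seq k) (c : k) : c \in s -> c \in gen s.
Proof. by move=> h; apply/asboolP; exists (EV (index c s)); rewrite /= nth_index. Qed.

Lemma phiE (s : seq k) (c : k) (h : c \in gen s) : oapp (io s) 0 (insub c : option (subF s)) = io s (Sub c h).
Proof. by rewrite insubT. Qed.

Lemma phi_zmod : zmod_morphism phi.
Proof.
move=> c d; rewrite /phi -rmorphB; apply: pi_eq; apply: (@Ucone [:: c; d]) => s hs.
have hc : c \in gen s by apply/gen_mem/hs; rewrite inE eqxx.
have hd : d \in gen s by apply/gen_mem/hs; rewrite !inE eqxx orbT.
have hcd : c - d \in gen s by rewrite rpredB.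
rewrite paddE poppE !(phiE hc, phiE hd, phiE hcd) -rmorphB; congr (io s _).
by apply: val_inj.
Qed.
Lemma phi_mon : monoid_morphism phi.
Proof.
split.
  apply: pi_eq; apply: UT => s; have h1 : (1 : k) \in gen s by rewrite rpred1.
  rewrite p1E (phiE h1) -(rmorph1 (io s)); congr (io s _).
  by apply: val_inj.
move=> c d; rewrite /phi -rmorphM; apply: pi_eq; apply: (@Ucone [:: c; d]) => s hs.
have hc : c \in gen s by apply/gen_mem/hs; rewrite inE eqxx.
have hd : d \in gen s by apply/gen_mem/hs; rewrite !inE eqxx orbT.
have hcd : c * d \in gen s by rewrite rpredM.
rewrite pmulE !(phiE hc, phiE hd, phiE hcd) -rmorphM; congr (io s _).
by apply: val_inj.
Qed.
HB.instance Definition _ := GRing.isZmodMorphism.Build k L phi phi_zmod.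
HB.instance Definition _ := GRing.isMonoidMorphism.Build k L phi phi_mon.
End Ultra.

Lemma closure_exists (k : fieldType) :
  exists (L : closedFieldType) (f : {rmorphism k -> L}), True.
Proof. by exists (@L k), (@phi k : {rmorphism k -> @L k}). Qed.

Local Close Scope classical_set_scope.
Local Close Scope quotient_scope.

Lemma dX (k : fieldType) (i j : nat) : (i < 5)%N -> (j < 5)%N ->
  (Xv (@inord 4 j) : {mpoly k[5]})^`M(@inord 4 i) = (j == i)%:R.
Proof.
move=> hi hj; rewrite /Xv mderivX.
rewrite mnm1E.
have -> : (@inord 4 j == @inord 4 i) = (j == i).
  by rewrite -val_eqE /= !inordK.
case: eqP => [->|_] /=.
  have -> : (U_(@inord 4 i) - U_(@inord 4 i))%MM = 0%MM.
    by apply/mnmP => l; rewrite mnmBE mnm0E subnn.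
  by rewrite mpolyX0 scale1r.
by rewrite scale0r.
Qed.

Section Ev.
Variables (k : fieldType) (L : fieldType) (f : {rmorphism k -> L}) (x : 'I_5 -> L).
Definition E (p : {mpoly k[5]}) : L := (map_mpoly f p).@[x].
Lemma EvD p q : E (p + q) = E p + E q. Proof. by rewrite /E rmorphD mevalD. Qed.
Lemma EvM p q : E (p * q) = E p * E q. Proof. by rewrite /E rmorphM mevalM. Qed.
Lemma EvZ c p : E (c *: p) = f c * E p. Proof. by rewrite /E map_mpolyZ mevalZ. Qed.
Lemma EvX i : E (Xv i) = x i. Proof. by rewrite /E /Xv map_mpolyX mevalXU. Qed.
Lemma E_zmod : zmod_morphism E. Proof. by move=> p q; rewrite /E rmorphB mevalB. Qed.
Lemma E_mon : monoid_morphism E.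
Proof. by split=> [|p q]; rewrite /E ?rmorph1 ?meval1 // rmorphM mevalM. Qed.
HB.instance Definition _ := GRing.isZmodMorphism.Build _ _ E E_zmod.
HB.instance Definition _ := GRing.isMonoidMorphism.Build _ _ E E_mon.
End Ev.

Section Ev2.
Variables (k : fieldType) (L : fieldType) (f : {rmorphism k -> L}) (x : 'I_5 -> L).
Variables a1 a2 a3 a4 a5 a6 a7 : k.
Local Notation E := (@E k L f x).
Local Notation y i := (x (@inord 4 i)).
Local Notation F := (Fa a1 a2 a3 a4 a5 a6 a7).

Lemma Ev1 : E 1 = 1. Proof. by rewrite /E rmorph1 meval1. Qed.
Lemma Ev0 : E 0 = 0. Proof. by rewrite /E rmorph0 meval0. Qed.
Lemma Evnat n : E n%:R = n%:R.
Proof. elim: n => [|n IH]; first by rewrite Ev0. by rewrite !mulrS EvD Ev1 IH. Qed.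

Lemma EF : E F = f a1 * y 0 ^+ 3 + f a2 * (y 0 * y 1 * y 4) + f a3 * (y 0 * y 2 * y 3)
  + f a4 * (y 1 ^+ 2 * y 3) + f a5 * (y 1 * y 2 ^+ 2) + f a6 * (y 2 * y 4 ^+ 2)
  + f a7 * (y 3 ^+ 2 * y 4).
Proof.
rewrite /Fa /= !exprS !expr0 !mulr1.
by rewrite !rmorphD /= !EvZ !EvM !EvX.
Qed.

Ltac dsolve := rewrite /Fa /= !exprS !expr0 !mulr1 !mderivD !mderivZ !mderivM !dX //=;
  rewrite !rmorphD /= !EvZ !(EvD, EvM, EvX, Ev0, Ev1); ring.

Lemma ED0 : E (F^`M(@inord 4 0)) = 3%:R * f a1 * y 0 ^+ 2 + f a2 * y 1 * y 4 + f a3 * y 2 * y 3.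
Proof. dsolve. Qed.
Lemma ED1 : E (F^`M(@inord 4 1)) = f a2 * y 0 * y 4 + 2%:R * f a4 * y 1 * y 3 + f a5 * y 2 ^+ 2.
Proof. dsolve. Qed.
Lemma ED2 : E (F^`M(@inord 4 2)) = f a3 * y 0 * y 3 + 2%:R * f a5 * y 1 * y 2 + f a6 * y 4 ^+ 2.
Proof. dsolve. Qed.
Lemma ED3 : E (F^`M(@inord 4 3)) = f a3 * y 0 * y 2 + f a4 * y 1 ^+ 2 + 2%:R * f a7 * y 3 * y 4.
Proof. dsolve. Qed.
Lemma ED4 : E (F^`M(@inord 4 4)) = f a2 * y 0 * y 1 + 2%:R * f a6 * y 2 * y 4 + f a7 * y 3 ^+ 2.
Proof. dsolve. Qed.
End Ev2.

Definition Dl {L : fieldType} (a1 a2 a3 K1 K2 : L) : L :=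
  a2^+4 * a3^+5 * K1 + 8%:R * a1 * a2^+2 * a3^+4 * K1^+2
  + 16%:R * a1^+2 * a3^+3 * K1^+3 + a2^+5 * a3^+4 * K2
  + 15%:R * a1 * a2^+3 * a3^+3 * K1 * K2
  + 12%:R * a1^+2 * a2 * a3^+2 * K1^+2 * K2
  + 8%:R * a1 * a2^+4 * a3^+2 * K2^+2
  + 12%:R * a1^+2 * a2^+2 * a3 * K1 * K2^+2
  + 27%:R * a1^+3 * K1^+2 * K2^+2
  + 16%:R * a1^+2 * a2^+3 * K2^+3.

Definition Phi {L : fieldType} (e1 e2 e3 b1 b2 b3 K2 : L) : L :=
  - (b1^+6 * b2^+3 * b3^+6)
  + - (12%:R * b1^+7 * b2^+2 * b3^+4 * K2)
  + - (48%:R * b1^+8 * b2 * b3^+2 * K2^+2)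
  + - (64%:R * b1^+9 * K2^+3)
  + 2%:R * e3 * b1^+3 * b2^+3 * b3^+6
  + - (9%:R * e3 * b1^+4 * b2^+2 * b3^+4 * K2)
  + 48%:R * e3 * b1^+5 * b2 * b3^+2 * K2^+2
  + - (48%:R * e3 * b1^+6 * K2^+3)
  + - (e3^+2 * b2^+3 * b3^+6)
  + 3%:R * e3^+2 * b1 * b2^+2 * b3^+4 * K2
  + - (12%:R * e3^+2 * b1^+2 * b2 * b3^+2 * K2^+2)
  + 15%:R * e3^+2 * b1^+3 * K2^+3
  + - (e3^+3 * K2^+3)
  + - (2%:R * e2 * b1^+4 * b2^+3 * b3^+6)
  + - (6%:R * e2 * b1^+5 * b2^+2 * b3^+4 * K2)
  + - (16%:R * e2 * b1^+6 * b2 * b3^+2 * K2^+2)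
  + - (96%:R * e2 * b1^+7 * K2^+3)
  + 2%:R * e2 * e3 * b1 * b2^+3 * b3^+6
  + - (3%:R * e2 * e3 * b1^+2 * b2^+2 * b3^+4 * K2)
  + 19%:R * e2 * e3 * b1^+3 * b2 * b3^+2 * K2^+2
  + - (12%:R * e2 * e3 * b1^+4 * K2^+3)
  + - (e2 * e3^+2 * b2 * b3^+2 * K2^+2)
  + 3%:R * e2 * e3^+2 * b1 * K2^+3
  + - (e2^+2 * b1^+2 * b2^+3 * b3^+6)
  + - (2%:R * e2^+2 * b1^+3 * b2^+2 * b3^+4 * K2)
  + - (e2^+2 * b1^+4 * b2 * b3^+2 * K2^+2)
  + - (36%:R * e2^+2 * b1^+5 * K2^+3)
  + 2%:R * e2^+2 * e3 * b1 * b2 * b3^+2 * K2^+2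
  + - (e2^+3 * b1^+2 * b2 * b3^+2 * K2^+2)
  + - (4%:R * e2^+3 * b1^+3 * K2^+3)
  + 2%:R * e1 * b1^+5 * b2^+3 * b3^+6
  + 16%:R * e1 * b1^+6 * b2^+2 * b3^+4 * K2
  + 32%:R * e1 * b1^+7 * b2 * b3^+2 * K2^+2
  + - (2%:R * e1 * e3 * b1^+2 * b2^+3 * b3^+6)
  + 6%:R * e1 * e3 * b1^+3 * b2^+2 * b3^+4 * K2
  + - (38%:R * e1 * e3 * b1^+4 * b2 * b3^+2 * K2^+2)
  + 72%:R * e1 * e3 * b1^+5 * K2^+3
  + - (e1 * e3^+2 * b2^+2 * b3^+4 * K2)
  + 2%:R * e1 * e3^+2 * b1 * b2 * b3^+2 * K2^+2
  + - (9%:R * e1 * e3^+2 * b1^+2 * K2^+3)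
  + 2%:R * e1 * e2 * b1^+3 * b2^+3 * b3^+6
  + 5%:R * e1 * e2 * b1^+4 * b2^+2 * b3^+4 * K2
  + 48%:R * e1 * e2 * b1^+6 * K2^+3
  + 2%:R * e1 * e2 * e3 * b1 * b2^+2 * b3^+4 * K2
  + - (3%:R * e1 * e2 * e3 * b1^+2 * b2 * b3^+2 * K2^+2)
  + 12%:R * e1 * e2 * e3 * b1^+3 * K2^+3
  + - (e1 * e2^+2 * b1^+2 * b2^+2 * b3^+4 * K2)
  + - (e1 * e2^+2 * b1^+3 * b2 * b3^+2 * K2^+2)
  + 12%:R * e1 * e2^+2 * b1^+4 * K2^+3
  + - (e1^+2 * b1^+4 * b2^+3 * b3^+6)
  + - (5%:R * e1^+2 * b1^+5 * b2^+2 * b3^+4 * K2)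
  + 8%:R * e1^+2 * b1^+6 * b2 * b3^+2 * K2^+2
  + 48%:R * e1^+2 * b1^+7 * K2^+3
  + - (2%:R * e1^+2 * e3 * b1^+2 * b2^+2 * b3^+4 * K2)
  + 2%:R * e1^+2 * e3 * b1^+3 * b2 * b3^+2 * K2^+2
  + - (24%:R * e1^+2 * e3 * b1^+4 * K2^+3)
  + 2%:R * e1^+2 * e2 * b1^+3 * b2^+2 * b3^+4 * K2
  + 8%:R * e1^+2 * e2 * b1^+4 * b2 * b3^+2 * K2^+2
  + - (e1^+3 * b1^+4 * b2^+2 * b3^+4 * K2)
  + - (8%:R * e1^+3 * b1^+5 * b2 * b3^+2 * K2^+2)
  + - (16%:R * e1^+3 * b1^+6 * K2^+3).
Lemma param_zero (L : fieldType) (b1 b2 b3 K1 K2 U V : L) : U != 0 -> V != 0 ->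
  K1 * U^+2 * V = (b1 + b2 * U)^+2 -> K2 * U * V^+2 = (b1 + b3 * V)^+2 ->
  3%:R * b1 + b2 * U + b3 * V = 0 -> Dl b1 b2 b3 K1 K2 = 0.
Proof.
move=> hU hV h1 h2 h3.
have hb3 : b3 = - (3%:R * b1 + b2 * U) / V.
  apply/(mulIf hV); rewrite divfK //.
  transitivity (b3 * V - (3%:R * b1 + b2 * U + b3 * V)); first by rewrite h3 subr0.
  ring.
have hK1 : K1 = (b1 + b2 * U)^+2 / (U^+2 * V).
  by rewrite -h1; field; rewrite hU hV.
have hK2 : K2 = (b1 + b3 * V)^+2 / (U * V^+2).
  by rewrite -h2; field; rewrite hU hV.
rewrite /Dl hK1 hK2 hb3.
field.
by rewrite hU hV.
Qed.

Definition G1 {L : fieldType} (b1 b2 b3 K1 P : L) : L :=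
  K1 * (b1 + P)^+2 * (P - 2%:R * b1) - b2^+2 * b3 * P^+2.
Definition G2 {L : fieldType} (b1 b2 b3 K2 P : L) : L :=
  - (K2 * (b1 + P) * (P - 2%:R * b1)^+2) - b2 * b3^+2 * (P - b1)^+2.

Lemma prodG2 (L : fieldType) (r1 r2 r3 b1 b2 b3 K2 : L) :
  G2 b1 b2 b3 K2 r1 * G2 b1 b2 b3 K2 r2 * G2 b1 b2 b3 K2 r3 =
  Phi (r1 + r2 + r3) (r1 * r2 + r1 * r3 + r2 * r3) (r1 * r2 * r3) b1 b2 b3 K2.
Proof. rewrite /G2 /Phi; ring. Qed.

Lemma PhiDl (L : fieldType) (b1 b2 b3 K1 K2 : L) : K1 != 0 ->
  K1^+3 * Phi (b2^+2 * b3 / K1) (- (3%:R * b1^+2)) (2%:R * b1^+3) b1 b2 b3 K2 =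
  - (b1^+4 * b2^+3 * b3^+3 * Dl b1 b2 b3 K1 K2).
Proof. move=> hK; rewrite /Phi /Dl; field. by rewrite hK. Qed.

Section Alg.
Variable L : fieldType.
Hypothesis hc : [pchar L] =i pred0.
Lemma nz (n : nat) : n != 0%N -> n%:R != 0 :> L.
Proof. by move=> h; rewrite ((pcharf0P L).1 hc). Qed.

Variables b1 b2 b3 b4 b5 b6 b7 : L.
Definition d0 (y0 y1 y2 y3 y4 : L) := 3%:R * b1 * y0^+2 + b2 * y1 * y4 + b3 * y2 * y3.
Definition d1 (y0 y1 y2 y3 y4 : L) := b2 * y0 * y4 + 2%:R * b4 * y1 * y3 + b5 * y2^+2.
Definition d2 (y0 y1 y2 y3 y4 : L) := b3 * y0 * y3 + 2%:R * b5 * y1 * y2 + b6 * y4^+2.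
Definition d3 (y0 y1 y2 y3 y4 : L) := b3 * y0 * y2 + b4 * y1^+2 + 2%:R * b7 * y3 * y4.
Definition d4 (y0 y1 y2 y3 y4 : L) := b2 * y0 * y1 + 2%:R * b6 * y2 * y4 + b7 * y3^+2.
Definition ff (y0 y1 y2 y3 y4 : L) := b1 * y0 ^+ 3 + b2 * (y0 * y1 * y4) + b3 * (y0 * y2 * y3)
  + b4 * (y1 ^+ 2 * y3) + b5 * (y1 * y2 ^+ 2) + b6 * (y2 * y4 ^+ 2) + b7 * (y3 ^+ 2 * y4).

Hypotheses (h1 : b1 != 0) (h4 : b4 != 0) (h5 : b5 != 0) (h6 : b6 != 0) (h7 : b7 != 0).

Lemma sq0 (c z : L) : c != 0 -> c * z ^+ 2 = 0 -> z = 0.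
Proof. by move=> hc0 /eqP; rewrite mulf_eq0 (negbTE hc0) expf_eq0 /= => /eqP. Qed.

Lemma x0_case (y1 y2 y3 y4 : L) :
  d1 0 y1 y2 y3 y4 = 0 -> d2 0 y1 y2 y3 y4 = 0 -> d3 0 y1 y2 y3 y4 = 0 ->
  d4 0 y1 y2 y3 y4 = 0 -> [/\ y1 = 0, y2 = 0, y3 = 0 & y4 = 0].
Proof.
rewrite /d1 /d2 /d3 /d4 => e1 e2 e3 e4.
have s12 : y1 = 0 -> y2 = 0.
  by move=> z; apply: (sq0 h5); rewrite -e1 z; ring.
have s24 : y2 = 0 -> y4 = 0.
  by move=> z; apply: (sq0 h6); rewrite -e2 z; ring.
have s43 : y4 = 0 -> y3 = 0.
  by move=> z; apply: (sq0 h7); rewrite -e4 z; ring.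
have s31 : y3 = 0 -> y1 = 0.
  by move=> z; apply: (sq0 h4); rewrite -e3 z; ring.
have key : 15%:R * (b4 * b5 * b6 * b7) * (y1 * y2 * y3 * y4) ^+ 2 = 0.
  have -> : 15%:R * (b4 * b5 * b6 * b7) * (y1 * y2 * y3 * y4) ^+ 2 =
    (b2 * 0 * y4 + 2%:R * b4 * y1 * y3 + b5 * y2 ^+ 2) * ((2%:R * b5 * y1 * y2) * (2%:R * b7 * y3 * y4) * (2%:R * b6 * y2 * y4))
    + (- (b5 * y2 ^+ 2)) * (b3 * 0 * y3 + 2%:R * b5 * y1 * y2 + b6 * y4 ^+ 2) * ((2%:R * b7 * y3 * y4) * (2%:R * b6 * y2 * y4))
    + (- (b5 * y2 ^+ 2)) * (- (b6 * y4 ^+ 2)) * (b3 * 0 * y2 + b4 * y1 ^+ 2 + 2%:R * b7 * y3 * y4) * (2%:R * b6 * y2 * y4)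
    + (- (b5 * y2 ^+ 2)) * (- (b6 * y4 ^+ 2)) * (- (b4 * y1 ^+ 2)) * (b2 * 0 * y1 + 2%:R * b6 * y2 * y4 + b7 * y3 ^+ 2).
    ring.
  by rewrite e1 e2 e3 e4; ring.
move/eqP: key; rewrite !mulf_eq0 (negbTE (nz (isT : 15 != 0)%N)) !(negbTE h4, negbTE h5, negbTE h6, negbTE h7) /=.
move=> H; have {H} H : [|| y1 == 0, y2 == 0, y3 == 0 | y4 == 0].
  by move: H; case: (y1 == 0); case: (y2 == 0); case: (y3 == 0); case: (y4 == 0).
case/or4P: H => /eqP z.
- by have z2 := s12 z; have z4 := s24 z2; have z3 := s43 z4.
- by have z4 := s24 z; have z3 := s43 z4; have z1 := s31 z3.
- by have z1 := s31 z; have z2 := s12 z1; have z4 := s24 z2.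
- by have z3 := s43 z; have z1 := s31 z3; have z2 := s12 z1.
Qed.

Lemma UV_nz (U V : L) : b4 * b6 * U^+2 * V = (b1 + b2 * U)^+2 ->
  b5 * b7 * U * V^+2 = (b1 + b3 * V)^+2 -> U != 0 /\ V != 0.
Proof.
move=> e1 e2; split; apply/eqP => z.
  have : (b1 + b2 * U)^+2 = 0 by rewrite -e1 z; ring.
  by rewrite z mulr0 addr0 => /eqP; rewrite expf_eq0 (negbTE h1).
have : (b1 + b3 * V)^+2 = 0 by rewrite -e2 z; ring.
by rewrite z mulr0 addr0 => /eqP; rewrite expf_eq0 (negbTE h1).
Qed.

Lemma dehom (y1 y2 y3 y4 : L) :
  d0 1 y1 y2 y3 y4 = 0 -> d1 1 y1 y2 y3 y4 = 0 -> d2 1 y1 y2 y3 y4 = 0 ->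
  d3 1 y1 y2 y3 y4 = 0 -> d4 1 y1 y2 y3 y4 = 0 -> Dl b1 b2 b3 (b4 * b6) (b5 * b7) = 0.
Proof.
rewrite /d0 /d1 /d2 /d3 /d4 => e0 e1 e2 e3 e4.
have h15 : (15%:R : L) != 0 by apply: nz.
have hP : b4 * (y1^+2 * y3) = - (b1 + b2 * (y1 * y4)).
  apply: (mulfI h15); apply/eqP; rewrite -subr_eq0; apply/eqP.
  transitivity (8%:R * (y1 * (b2 * 1 * y4 + 2%:R * b4 * y1 * y3 + b5 * y2 ^+ 2))
    - 4%:R * (y2 * (b3 * 1 * y3 + 2%:R * b5 * y1 * y2 + b6 * y4 ^+ 2))
    - (y3 * (b3 * 1 * y2 + b4 * y1 ^+ 2 + 2%:R * b7 * y3 * y4))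
    + 2%:R * (y4 * (b2 * 1 * y1 + 2%:R * b6 * y2 * y4 + b7 * y3 ^+ 2))
    + 5%:R * (3%:R * b1 * 1 ^+ 2 + b2 * y1 * y4 + b3 * y2 * y3)); first by ring.
  by rewrite e0 e1 e2 e3 e4; ring.
have hR : b6 * (y2 * y4^+2) = - (b1 + b2 * (y1 * y4)).
  apply: (mulfI h15); apply/eqP; rewrite -subr_eq0; apply/eqP.
  transitivity (2%:R * (y1 * (b2 * 1 * y4 + 2%:R * b4 * y1 * y3 + b5 * y2 ^+ 2))
    - 1 * (y2 * (b3 * 1 * y3 + 2%:R * b5 * y1 * y2 + b6 * y4 ^+ 2))
    - 4%:R * (y3 * (b3 * 1 * y2 + b4 * y1 ^+ 2 + 2%:R * b7 * y3 * y4))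
    + 8%:R * (y4 * (b2 * 1 * y1 + 2%:R * b6 * y2 * y4 + b7 * y3 ^+ 2))
    + 5%:R * (3%:R * b1 * 1 ^+ 2 + b2 * y1 * y4 + b3 * y2 * y3)); first by ring.
  by rewrite e0 e1 e2 e3 e4; ring.
have hQ : b5 * (y1 * y2^+2) = - (b1 + b3 * (y2 * y3)).
  apply: (mulfI h15); apply/eqP; rewrite -subr_eq0; apply/eqP.
  transitivity (- (y1 * (b2 * 1 * y4 + 2%:R * b4 * y1 * y3 + b5 * y2 ^+ 2))
    + 8%:R * (y2 * (b3 * 1 * y3 + 2%:R * b5 * y1 * y2 + b6 * y4 ^+ 2))
    + 2%:R * (y3 * (b3 * 1 * y2 + b4 * y1 ^+ 2 + 2%:R * b7 * y3 * y4))
    - 4%:R * (y4 * (b2 * 1 * y1 + 2%:R * b6 * y2 * y4 + b7 * y3 ^+ 2))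
    + 5%:R * (3%:R * b1 * 1 ^+ 2 + b2 * y1 * y4 + b3 * y2 * y3)); first by ring.
  by rewrite e0 e1 e2 e3 e4; ring.
have hS : b7 * (y3^+2 * y4) = - (b1 + b3 * (y2 * y3)).
  apply: (mulfI h15); apply/eqP; rewrite -subr_eq0; apply/eqP.
  transitivity (- 4%:R * (y1 * (b2 * 1 * y4 + 2%:R * b4 * y1 * y3 + b5 * y2 ^+ 2))
    + 2%:R * (y2 * (b3 * 1 * y3 + 2%:R * b5 * y1 * y2 + b6 * y4 ^+ 2))
    + 8%:R * (y3 * (b3 * 1 * y2 + b4 * y1 ^+ 2 + 2%:R * b7 * y3 * y4))
    - (y4 * (b2 * 1 * y1 + 2%:R * b6 * y2 * y4 + b7 * y3 ^+ 2))
    + 5%:R * (3%:R * b1 * 1 ^+ 2 + b2 * y1 * y4 + b3 * y2 * y3)); first by ring.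
  by rewrite e0 e1 e2 e3 e4; ring.
have E1 : b4 * b6 * (y1 * y4)^+2 * (y2 * y3) = (b1 + b2 * (y1 * y4))^+2.
  transitivity ((b4 * (y1^+2 * y3)) * (b6 * (y2 * y4^+2))); first by ring.
  by rewrite hP hR; ring.
have E2 : b5 * b7 * (y1 * y4) * (y2 * y3)^+2 = (b1 + b3 * (y2 * y3))^+2.
  transitivity ((b5 * (y1 * y2^+2)) * (b7 * (y3^+2 * y4))); first by ring.
  by rewrite hQ hS; ring.
have E3 : 3%:R * b1 + b2 * (y1 * y4) + b3 * (y2 * y3) = 0.
  by rewrite -e0; ring.
have [hU hV] := UV_nz E1 E2.
exact: param_zero hU hV E1 E2 E3.
Qed.

Lemma nosing (y0 y1 y2 y3 y4 : L) :
  [|| y0 != 0, y1 != 0, y2 != 0, y3 != 0 | y4 != 0] ->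
  d0 y0 y1 y2 y3 y4 = 0 -> d1 y0 y1 y2 y3 y4 = 0 -> d2 y0 y1 y2 y3 y4 = 0 ->
  d3 y0 y1 y2 y3 y4 = 0 -> d4 y0 y1 y2 y3 y4 = 0 -> Dl b1 b2 b3 (b4 * b6) (b5 * b7) = 0.
Proof.
move=> hnz e0 e1 e2 e3 e4.
have [z0|nz0] := eqVneq y0 0.
  move: e1 e2 e3 e4; rewrite z0 => e1 e2 e3 e4.
  have [z1 z2 z3 z4] := x0_case e1 e2 e3 e4.
  by move: hnz; rewrite z0 z1 z2 z3 z4 eqxx.
have sc (e : L) : e = 0 -> e / y0^+2 = 0 by move=> ->; rewrite mul0r.
apply: (@dehom (y1 / y0) (y2 / y0) (y3 / y0) (y4 / y0)).
- rewrite -(sc _ e0) /d0; field; exact: nz0.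
- rewrite -(sc _ e1) /d1; field; exact: nz0.
- rewrite -(sc _ e2) /d2; field; exact: nz0.
- rewrite -(sc _ e3) /d3; field; exact: nz0.
- rewrite -(sc _ e4) /d4; field; exact: nz0.
Qed.
End Alg.

Section Closed.
Variable L : closedFieldType.
Hypothesis hc : [pchar L] =i pred0.
Local Notation nz := (nz hc).

Lemma root3 (c0 c1 c2 : L) : exists x, x^+3 = c0 + c1 * x + c2 * x^+2.
Proof.
have [x hx] := @solve_monicpoly L 3 (fun i => nth 0 [:: c0; c1; c2] i) isT.
by exists x; rewrite hx !big_ord_recl big_ord0 /=; ring.
Qed.
Lemma root2 (c0 c1 : L) : exists x, x^+2 = c0 + c1 * x.
Proof.
have [x hx] := @solve_monicpoly L 2 (fun i => nth 0 [:: c0; c1] i) isT.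
by exists x; rewrite hx !big_ord_recl big_ord0 /=; ring.
Qed.
Lemma root5 (c : L) : exists x, x^+5 = c.
Proof.
have [x hx] := @solve_monicpoly L 5 (fun i => nth 0 [:: c] i) isT.
by exists x; rewrite hx !big_ord_recl big_ord0 /=; ring.
Qed.

Lemma prod0 (a c : L) : a != 0 -> a * c = 0 -> c = 0.
Proof. by move=> ha /eqP; rewrite mulf_eq0 (negbTE ha) => /eqP. Qed.

Variables b1 b2 b3 b4 b5 b6 b7 : L.
Hypotheses (h1 : b1 != 0) (h4 : b4 != 0) (h5 : b5 != 0) (h6 : b6 != 0) (h7 : b7 != 0).

Lemma exist_sol : Dl b1 b2 b3 (b4 * b6) (b5 * b7) = 0 ->
  exists U V, [/\ b4 * b6 * U^+2 * V = (b1 + b2 * U)^+2,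
     b5 * b7 * U * V^+2 = (b1 + b3 * V)^+2 & 3%:R * b1 + b2 * U + b3 * V = 0].
Proof.
move=> hD.
have hK1 : b4 * b6 != 0 by rewrite mulf_neq0.
have hK2 : b5 * b7 != 0 by rewrite mulf_neq0.
move: hD; set K1 := b4 * b6; set K2 := b5 * b7 => hD.
have n3 : (3%:R : L) != 0 by apply: nz.
have n9 : (9%:R : L) != 0 by apply: nz.
have n16 : (16%:R : L) != 0 by apply: nz.
have n27 : (27%:R : L) != 0 by apply: nz.
have [z2|nz2] := eqVneq b2 0.
  have [z3|nz3] := eqVneq b3 0.
    exfalso; move: hD; rewrite /Dl z2 z3 => /eqP.
    have -> : 0 ^+ 4 * 0 ^+ 5 * K1 + 8%:R * b1 * 0 ^+ 2 * 0 ^+ 4 * K1 ^+ 2 +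
      16%:R * b1 ^+ 2 * 0 ^+ 3 * K1 ^+ 3 + 0 ^+ 5 * 0 ^+ 4 * K2 +
      15%:R * b1 * 0 ^+ 3 * 0 ^+ 3 * K1 * K2 +
      12%:R * b1 ^+ 2 * 0 * 0 ^+ 2 * K1 ^+ 2 * K2 +
      8%:R * b1 * 0 ^+ 4 * 0 ^+ 2 * K2 ^+ 2 +
      12%:R * b1 ^+ 2 * 0 ^+ 2 * 0 * K1 * K2 ^+ 2 +
      27%:R * b1 ^+ 3 * K1 ^+ 2 * K2 ^+ 2 + 16%:R * b1 ^+ 2 * 0 ^+ 3 * K2 ^+ 3 =
      27%:R * b1 ^+ 3 * K1 ^+ 2 * K2 ^+ 2 :> L by ring.
    by rewrite !mulf_eq0 (negbTE n27) (negbTE h1) (negbTE h4) (negbTE h5) (negbTE h6) (negbTE h7).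
  have hh : 16%:R * b3^+3 * K1 + 27%:R * b1 * K2^+2 = 0.
    have e : Dl b1 b2 b3 K1 K2 = b1^+2 * K1^+2 * (16%:R * b3^+3 * K1 + 27%:R * b1 * K2^+2).
      by rewrite /Dl z2; ring.
    apply: (@prod0 (b1^+2 * K1^+2)); first by rewrite mulf_neq0 ?expf_neq0.
    by rewrite -e.
  have eK1 : K1 = - (27%:R * b1 * K2^+2) / (16%:R * b3^+3).
    apply: (mulIf (mulf_neq0 n16 (expf_neq0 3 nz3))); rewrite divfK ?mulf_neq0 ?expf_neq0 //.
    transitivity (16%:R * b3^+3 * K1 + 27%:R * b1 * K2^+2 - 27%:R * b1 * K2^+2); first by ring.
    by rewrite hh sub0r.
  exists (4%:R * b3^+2 / (9%:R * K2)), (- (3%:R * b1) / b3); split.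
  - by rewrite eK1 z2; field; rewrite n16 nz3 n9 hK2.
  - by field; rewrite nz3 n9 hK2.
  - by rewrite z2 mul0r addr0 [b3 * _]mulrC divfK // addrN.
have [z3|nz3] := eqVneq b3 0.
  have hh : 16%:R * b2^+3 * K2 + 27%:R * b1 * K1^+2 = 0.
    have e : Dl b1 b2 b3 K1 K2 = b1^+2 * K2^+2 * (16%:R * b2^+3 * K2 + 27%:R * b1 * K1^+2).
      by rewrite /Dl z3; ring.
    apply: (@prod0 (b1^+2 * K2^+2)); first by rewrite mulf_neq0 ?expf_neq0.
    by rewrite -e.
  have eK2 : K2 = - (27%:R * b1 * K1^+2) / (16%:R * b2^+3).
    apply: (mulIf (mulf_neq0 n16 (expf_neq0 3 nz2))); rewrite divfK ?mulf_neq0 ?expf_neq0 //.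
    transitivity (16%:R * b2^+3 * K2 + 27%:R * b1 * K1^+2 - 27%:R * b1 * K1^+2); first by ring.
    by rewrite hh sub0r.
  exists (- (3%:R * b1) / b2), (4%:R * b2^+2 / (9%:R * K1)); split.
  - by field; rewrite nz2 n9 hK1.
  - by rewrite eK2 z3; field; rewrite n16 nz2 n9 hK1.
  - by rewrite z3 mul0r addr0 [b2 * _]mulrC divfK // addrN.
have from_root (P : L) : G1 b1 b2 b3 K1 P = 0 -> G2 b1 b2 b3 K2 P = 0 ->
  exists U V, [/\ K1 * U^+2 * V = (b1 + b2 * U)^+2,
     K2 * U * V^+2 = (b1 + b3 * V)^+2 & 3%:R * b1 + b2 * U + b3 * V = 0].
  rewrite /G1 /G2 => /eqP; rewrite subr_eq0 => /eqP g1 /eqP; rewrite subr_eq0 => /eqP g2.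
  exists (- (b1 + P) / b2), ((P - 2%:R * b1) / b3); split.
  - transitivity (K1 * (b1 + P)^+2 * (P - 2%:R * b1) / (b2^+2 * b3)).
      by field; rewrite nz2 nz3.
    by rewrite g1; field; rewrite nz2 nz3.
  - transitivity (- (K2 * (b1 + P) * (P - 2%:R * b1)^+2) / (b2 * b3^+2)).
      by field; rewrite nz2 nz3.
    by rewrite g2; field; rewrite nz2 nz3.
  - by field; rewrite nz2 nz3.
have [e1 he1] : exists e1, e1 = b2^+2 * b3 / K1 by exists (b2^+2 * b3 / K1).
have [e2 he2] : exists e2 : L, e2 = - (3%:R * b1^+2) by exists (- (3%:R * b1^+2)).
have [e3 he3] : exists e3 : L, e3 = 2%:R * b1^+3 by exists (2%:R * b1^+3).
have [r1 hr1] := root3 e3 (- e2) e1.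
have [be hbe] : exists be, be = r1 - e1 by exists (r1 - e1).
have [ga hga] : exists ga, ga = r1^+2 - e1 * r1 + e2 by exists (r1^+2 - e1 * r1 + e2).
have [r2 hr2] := root2 (- ga) (- be).
have [r3 hr3] : exists r3, r3 = - be - r2 by exists (- be - r2).
have s1 : r1 + r2 + r3 = e1 by rewrite hr3 hbe; ring.
have s2 : r1 * r2 + r1 * r3 + r2 * r3 = e2.
  transitivity (- r1 * be - be * r2 - r2^+2); first by rewrite hr3; ring.
  by rewrite hr2 hga hbe; ring.
have s3 : r1 * r2 * r3 = e3.
  transitivity (r1 * (- be * r2 - r2^+2)); first by rewrite hr3; ring.
  rewrite hr2 hga.
  transitivity (r1^+3 - e1 * r1^+2 + e2 * r1); first by ring.
  by rewrite hr1; ring.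
have M (P : L) : G1 b1 b2 b3 K1 P = K1 * ((P - r1) * (P - r2) * (P - r3)).
  transitivity (K1 * (P^+3 - (r1 + r2 + r3) * P^+2 + (r1 * r2 + r1 * r3 + r2 * r3) * P - r1 * r2 * r3));
    last by congr (_ * _); ring.
  by rewrite s1 s2 s3 he1 he2 he3 /G1; field.
have hprod : G2 b1 b2 b3 K2 r1 * G2 b1 b2 b3 K2 r2 * G2 b1 b2 b3 K2 r3 = 0.
  apply: (@prod0 (K1^+3)); first by rewrite expf_neq0.
  by rewrite prodG2 s1 s2 s3 he1 he2 he3 PhiDl // hD !mulr0 oppr0.
move/eqP: hprod; rewrite !mulf_eq0 => /orP[/orP[]|] /eqP hG2.
- by apply: (from_root r1) => //; rewrite M; ring.
- by apply: (from_root r2) => //; rewrite M; ring.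
- by apply: (from_root r3) => //; rewrite M; ring.
Qed.

Lemma build_point (U V : L) : U != 0 -> V != 0 ->
  b4 * b6 * U^+2 * V = (b1 + b2 * U)^+2 ->
  b5 * b7 * U * V^+2 = (b1 + b3 * V)^+2 -> 3%:R * b1 + b2 * U + b3 * V = 0 ->
  exists y1 y2 y3 y4 : L,
   ff b1 b2 b3 b4 b5 b6 b7 1 y1 y2 y3 y4 = 0 /\ [/\ d0 b1 b2 b3 1 y1 y2 y3 y4 = 0,
       d1 b2 b4 b5 1 y1 y2 y3 y4 = 0, d2 b3 b5 b6 1 y1 y2 y3 y4 = 0,
     d3 b3 b4 b7 1 y1 y2 y3 y4 = 0 & d4 b2 b6 b7 1 y1 y2 y3 y4 = 0].
Proof.
move=> hU hV E1 E2 E3.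
have [P' hP'] : exists P' : L, P' = - (b1 + b2 * U) by eexists.
have [Q' hQ'] : exists Q' : L, Q' = b1 - P' by eexists.
have hPn : P' != 0.
  apply/eqP => z; have : b4 * b6 * U^+2 * V != 0 by rewrite !mulf_neq0 ?expf_neq0.
  rewrite E1; have -> : b1 + b2 * U = - P' by rewrite hP' opprK.
  by rewrite z oppr0 expr0n eqxx.
have hb3V : b3 * V = - Q' - b1.
  transitivity (3%:R * b1 + b2 * U + b3 * V - (3%:R * b1 + b2 * U)); first by ring.
  by rewrite E3 hQ' hP'; ring.
have hQn : Q' != 0.
  apply/eqP => z; have : b5 * b7 * U * V^+2 != 0 by rewrite !mulf_neq0 ?expf_neq0.
  rewrite E2; have -> : b1 + b3 * V = - Q' by rewrite hb3V; ring.
  by rewrite z oppr0 expr0n eqxx.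
have hb2 : b2 = - (b1 + P') / U.
  by rewrite hP'; field; rewrite hU.
have hb3 : b3 = (P' - 2%:R * b1) / V.
  apply: (mulIf hV); rewrite divfK // hb3V hQ'; ring.
have hb6 : b6 = P'^+2 / (b4 * U^+2 * V).
  rewrite hP' sqrrN -E1; field; by rewrite h4 hU hV.
have hb7 : b7 = Q'^+2 / (b5 * U * V^+2).
  have -> : Q'^+2 = (b1 + b3 * V)^+2 by rewrite hb3V; ring.
  rewrite -E2; field; by rewrite h5 hU hV.
have [p hp] : exists p : L, p = P' / b4 by eexists.
have [q hq] : exists q : L, q = Q' / b5 by eexists.
have hpn : p != 0 by rewrite hp mulf_neq0 ?invr_eq0.
have hqn : q != 0 by rewrite hq mulf_neq0 ?invr_eq0.
have [w hw] := root5 (p^+2 * q / V^+2).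
have hwn : w != 0.
  apply/eqP => z; have : p^+2 * q / V^+2 != 0.
    by rewrite !mulf_neq0 ?expf_neq0 ?invr_eq0 ?expf_neq0.
  by rewrite -hw z expr0n eqxx.
exists w, (V * w^+2 / p), (p / w^+2), (U / w); split; [|split].
- rewrite /ff.
  transitivity (b1 + b2 * U + b3 * V + b4 * p + b5 * V^+2 * w^+5 / p^+2
     + b6 * V * U^+2 / p + b7 * p^+2 * U / w^+5).
    by field; rewrite hpn hwn.
  rewrite hw hb2 hb3 hb6 hb7 hp hq hQ'; field.
  by rewrite ?hV ?h5 ?h4 ?hPn ?hU -?hQ' ?hQn ?hwn.
- rewrite /d0; transitivity (3%:R * b1 + b2 * U + b3 * V); last exact: E3.
  by field; rewrite hpn hwn.
- rewrite /d1; transitivity ((b2 * U + 2%:R * b4 * p + b5 * V^+2 * w^+5 / p^+2) / w).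
    by field; rewrite hpn hwn.
  rewrite hw hb2 hp hq hQ'; field.
  by rewrite ?hV ?h5 ?h4 ?hPn ?hU -?hQ' ?hQn ?hwn.
- rewrite /d2; transitivity ((b3 * p + 2%:R * b5 * V * w^+5 / p + b6 * U^+2) / w^+2).
    by field; rewrite hpn hwn.
  rewrite hw hb3 hb6 hp hq hQ'; field.
  by rewrite ?hV ?h5 ?h4 ?hPn ?hU -?hQ' ?hQn ?hwn.
- rewrite /d3; transitivity ((b3 * V * w^+5 / p + b4 * w^+5 + 2%:R * b7 * p * U) / w^+3).
    by field; rewrite hpn hwn.
  rewrite hw hb3 hb7 hp hq hQ'; field.
  by rewrite ?hV ?h5 ?h4 ?hPn ?hU -?hQ' ?hQn ?hwn.
- rewrite /d4; transitivity ((b2 * w^+5 + 2%:R * b6 * V * U * w^+5 / p + b7 * p^+2) / w^+4).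
    by field; rewrite hpn hwn.
  rewrite hw hb2 hb6 hb7 hp hq hQ'; field.
  by rewrite ?hV ?h5 ?h4 ?hPn ?hU -?hQ' ?hQn ?hwn.
Qed.
End Closed.

Lemma Dd_Dl (L : fieldType) (b1 b2 b3 b4 b5 b6 b7 : L) :
  Dd b1 b2 b3 b4 b5 b6 b7 = b1 * b4 * b5 * b6 * b7 * Dl b1 b2 b3 (b4 * b6) (b5 * b7).
Proof. rewrite /Dd /Delta /Dl; ring. Qed.

Lemma Dd_map (k L : fieldType) (f : {rmorphism k -> L}) (a1 a2 a3 a4 a5 a6 a7 : k) :
  f (Dd a1 a2 a3 a4 a5 a6 a7) = Dd (f a1) (f a2) (f a3) (f a4) (f a5) (f a6) (f a7).
Proof. by rewrite /Dd /Delta !(rmorphD, rmorphM, rmorphXn, rmorph_nat). Qed.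

Lemma ord5_cases (P : 'I_5 -> Prop) : P (inord 0) -> P (inord 1) -> P (inord 2) ->
  P (inord 3) -> P (inord 4) -> forall i, P i.
Proof.
move=> p0 p1 p2 p3 p4 [m hm].
have -> : Ordinal hm = inord m by apply: val_inj; rewrite /= inordK.
by move: hm; do 5?[case: m => [_|m] //].
Qed.

Lemma nz5 (L : fieldType) (x : 'I_5 -> L) : (exists i, x i != 0) ->
  [|| x (inord 0) != 0, x (inord 1) != 0, x (inord 2) != 0, x (inord 3) != 0
    | x (inord 4) != 0].
Proof. by case=> i; move: i; apply: ord5_cases => h; rewrite h ?orbT. Qed.

Definition mk5 (L : fieldType) (z0 z1 z2 z3 z4 : L) : 'I_5 -> L :=
  fun i => nth 0 [:: z0; z1; z2; z3; z4] i.

Lemma sing_of (k L : fieldType) (f : {rmorphism k -> L}) (a1 a2 a3 a4 a5 a6 a7 : k)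
    (z0 z1 z2 z3 z4 : L) :
  [|| z0 != 0, z1 != 0, z2 != 0, z3 != 0 | z4 != 0] ->
  ff (f a1) (f a2) (f a3) (f a4) (f a5) (f a6) (f a7) z0 z1 z2 z3 z4 = 0 ->
  d0 (f a1) (f a2) (f a3) z0 z1 z2 z3 z4 = 0 ->
  d1 (f a2) (f a4) (f a5) z0 z1 z2 z3 z4 = 0 ->
  d2 (f a3) (f a5) (f a6) z0 z1 z2 z3 z4 = 0 ->
  d3 (f a3) (f a4) (f a7) z0 z1 z2 z3 z4 = 0 ->
  d4 (f a2) (f a6) (f a7) z0 z1 z2 z3 z4 = 0 ->
  singular_point f (Fa a1 a2 a3 a4 a5 a6 a7) (mk5 z0 z1 z2 z3 z4).
Proof.
move=> hnz hF h0 h1 h2 h3 h4; split; [|split].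
- case/or4P: hnz => [h|h|h|/orP[h|h]].
  + by exists (inord 0); rewrite /mk5 inordK.
  + by exists (inord 1); rewrite /mk5 inordK.
  + by exists (inord 2); rewrite /mk5 inordK.
  + by exists (inord 3); rewrite /mk5 inordK.
  + by exists (inord 4); rewrite /mk5 inordK.
- change (E f (mk5 z0 z1 z2 z3 z4) (Fa a1 a2 a3 a4 a5 a6 a7) = 0).
  by rewrite EF /mk5 !inordK.
- apply: ord5_cases.
  + change (E f (mk5 z0 z1 z2 z3 z4) ((Fa a1 a2 a3 a4 a5 a6 a7)^`M(@inord 4 0)) = 0).
    by rewrite ED0 /mk5 !inordK.
  + change (E f (mk5 z0 z1 z2 z3 z4) ((Fa a1 a2 a3 a4 a5 a6 a7)^`M(@inord 4 1)) = 0).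
    by rewrite ED1 /mk5 !inordK.
  + change (E f (mk5 z0 z1 z2 z3 z4) ((Fa a1 a2 a3 a4 a5 a6 a7)^`M(@inord 4 2)) = 0).
    by rewrite ED2 /mk5 !inordK.
  + change (E f (mk5 z0 z1 z2 z3 z4) ((Fa a1 a2 a3 a4 a5 a6 a7)^`M(@inord 4 3)) = 0).
    by rewrite ED3 /mk5 !inordK.
  + change (E f (mk5 z0 z1 z2 z3 z4) ((Fa a1 a2 a3 a4 a5 a6 a7)^`M(@inord 4 4)) = 0).
    by rewrite ED4 /mk5 !inordK.
Qed.

Theorem lemma1p1 (k : fieldType)
  (hchar : [pchar k] =i pred0)
  (hzeta : exists z : k, 5.-primitive_root z)
  (a1 a2 a3 a4 a5 a6 a7 : k) :
  smooth_hypersurface (Fa a1 a2 a3 a4 a5 a6 a7) <-> Dd a1 a2 a3 a4 a5 a6 a7 != 0.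
Proof.
split.
- move=> hs; apply/negP => /eqP hD0.
  have [L [phi _]] := closure_exists k.
  have hcL : [pchar L] =i pred0 by move=> p; rewrite (fmorph_pchar phi) hchar.
  have hDb : Dd (phi a1) (phi a2) (phi a3) (phi a4) (phi a5) (phi a6) (phi a7) = 0.
    by rewrite -Dd_map hD0 rmorph0.
  suff [x hx] : exists x, singular_point phi (Fa a1 a2 a3 a4 a5 a6 a7) x.
    exact: hs L phi x hx.
  have [z1|n1] := eqVneq (phi a1) 0.
    exists (mk5 1 0 0 0 0); apply: sing_of; rewrite ?oner_neq0 //;
      rewrite /ff /d0 /d1 /d2 /d3 /d4 ?z1; ring.
  have [z4|n4] := eqVneq (phi a4) 0.
    exists (mk5 0 1 0 0 0); apply: sing_of; rewrite ?oner_neq0 ?orbT //;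
      rewrite /ff /d0 /d1 /d2 /d3 /d4 ?z4; ring.
  have [z5|n5] := eqVneq (phi a5) 0.
    exists (mk5 0 0 1 0 0); apply: sing_of; rewrite ?oner_neq0 ?orbT //;
      rewrite /ff /d0 /d1 /d2 /d3 /d4 ?z5; ring.
  have [z6|n6] := eqVneq (phi a6) 0.
    exists (mk5 0 0 0 0 1); apply: sing_of; rewrite ?oner_neq0 ?orbT //;
      rewrite /ff /d0 /d1 /d2 /d3 /d4 ?z6; ring.
  have [z7|n7] := eqVneq (phi a7) 0.
    exists (mk5 0 0 0 1 0); apply: sing_of; rewrite ?oner_neq0 ?orbT //;
      rewrite /ff /d0 /d1 /d2 /d3 /d4 ?z7; ring.
  have hDl : Dl (phi a1) (phi a2) (phi a3) (phi a4 * phi a6) (phi a5 * phi a7) = 0.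
    apply: (@prod0 L (phi a1 * phi a4 * phi a5 * phi a6 * phi a7)).
      by rewrite !mulf_neq0.
    by rewrite -Dd_Dl.
  have [U [V [E1 E2 E3]]] := exist_sol hcL n1 n4 n5 n6 n7 hDl.
  have [hU hV] := UV_nz n1 E1 E2.
  have [y1 [y2 [y3 [y4 [hF [e0 e1 e2 e3 e4]]]]]] := build_point n4 n5 n6 n7 hU hV E1 E2 E3.
  exists (mk5 1 y1 y2 y3 y4); apply: sing_of => //.
  by rewrite oner_neq0.
- move=> hD L f x [hx [hF hd]].
  have hcL : [pchar L] =i pred0 by move=> p; rewrite (fmorph_pchar f) hchar.
  have hDb : Dd (f a1) (f a2) (f a3) (f a4) (f a5) (f a6) (f a7) != 0.
    by rewrite -Dd_map fmorph_eq0.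
  move: hDb; rewrite Dd_Dl !mulf_eq0 !negb_or => /andP[/andP[/andP[/andP[/andP[n1 n4] n5] n6] n7] nD].
  have e0 : E f x ((Fa a1 a2 a3 a4 a5 a6 a7)^`M(inord 0)) = 0 := hd (inord 0).
  have e1 : E f x ((Fa a1 a2 a3 a4 a5 a6 a7)^`M(inord 1)) = 0 := hd (inord 1).
  have e2 : E f x ((Fa a1 a2 a3 a4 a5 a6 a7)^`M(inord 2)) = 0 := hd (inord 2).
  have e3 : E f x ((Fa a1 a2 a3 a4 a5 a6 a7)^`M(inord 3)) = 0 := hd (inord 3).
  have e4 : E f x ((Fa a1 a2 a3 a4 a5 a6 a7)^`M(inord 4)) = 0 := hd (inord 4).
  rewrite ED0 in e0; rewrite ED1 in e1; rewrite ED2 in e2; rewrite ED3 in e3; rewrite ED4 in e4.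
  move/eqP: nD; apply.
  exact: (nosing hcL n1 n4 n5 n6 n7 (nz5 hx) e0 e1 e2 e3 e4).
Qed.
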